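(* Let $\Omega$ be a countable set, $G$ a closed subgroup of $S=\mathrm{Sym}(\Omega)$, and $(\Delta_i)_{i\in I}$ a family of subsets of $\Omega$. Then either (i) there exists a finite set $\Gamma\subseteq\Omega$ such that $G_{(\Gamma)}\le S_{\{\Delta_i\}}$ for all but finitely many $i\in I$, or (ii) there exists $g\in G$ such that $g\notin S_{\{\Delta_i\}}$ for infinitely many $i\in I$. Moreover, if all $\Delta_i$ are finite, then in (i) ''all but finitely many'' can be strengthened to ''all''.
   Context: $\mathrm{Sym}(\Omega)$ is the group of all permutations of $\Omega$ (acting on the right), with the function topology (pointwise convergence, $\Omega$ discrete); ''closed'' means closed in $S$. $G_{(\Gamma)}$ is the pointwise stabilizer of $\Gamma$ in $G$, and $S_{\{\Delta\}}=\{f\in S:\Delta f=\Delta\}$ is the setwise stabilizer. *)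

(* Defs.v *)
(* Omega is a countType T; permutations of Omega
   are bijective functions T -> T; sets are Prop-valued predicates. *)
From Stdlib Require List.
From mathcomp Require Import all_boot.
Set Implicit Arguments. Unset Strict Implicit. Unset Printing Implicit Defensive.

Definition in_Sym (T : Type) (f : T -> T) : Prop := bijective f.

Definition is_subgroup_Sym (T : Type) (G : (T -> T) -> Prop) : Prop :=
  [/\ (forall f, G f -> in_Sym f),
      G id,
      (forall f g, G f -> G g -> G (g \o f)) &
      (forall f, G f -> exists2 h, G h & cancel f h /\ cancel h f)].

(* G is closed in Sym(T) for the topology of pointwise convergence (T discrete):
   every permutation f every basic neighbourhood {h | h = f on a finite set A}
   of which meets G lies in G. *)
Definition closed_in_Sym (T : eqType) (G : (T -> T) -> Prop) : Prop :=
  forall f, in_Sym f ->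
    (forall A : seq T, exists2 g, G g & forall x, x \in A -> g x = f x) -> G f.

Definition closed_subgroup_Sym (T : eqType) (G : (T -> T) -> Prop) : Prop :=
  is_subgroup_Sym G /\ closed_in_Sym G.

Definition ptstab (T : eqType) (G : (T -> T) -> Prop) (Gamma : seq T)
  (g : T -> T) : Prop := G g /\ forall x, x \in Gamma -> g x = x.

Definition setstab (T : Type) (Delta : T -> Prop) (f : T -> T) : Prop :=
  in_Sym f /\
  (forall y, (exists2 x, Delta x & f x = y) <-> Delta y).

Definition subgrp_le (T : Type) (H K : (T -> T) -> Prop) : Prop :=
  forall g, H g -> K g.

Definition cofinitely (I : Type) (P : I -> Prop) : Prop :=
  exists s : list I, forall i, ~ List.In i s -> P i.

Definition infinitely_many (I : Type) (P : I -> Prop) : Prop :=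
  ~ exists s : list I, forall i, P i -> List.In i s.

Definition finite_subset (T : Type) (D : T -> Prop) : Prop :=
  exists s : list T, forall x, D x -> List.In x s.

(* Main.v *)
From Stdlib Require List.
From Stdlib Require Import Classical ClassicalEpsilon.
Require Import Defs.
From mathcomp Require Import all_boot.
Set Implicit Arguments. Unset Strict Implicit. Unset Printing Implicit Defensive.

Lemma stab_pt T (D : T -> Prop) f : setstab D f -> forall z, D z <-> D (f z).
Proof.
move=> [[fi fK fiK] H] z; split.
- by move=> Dz; apply/H; exists z.
- by move=> /H [x Dx /(can_inj fK) <-].
Qed.

Lemma nstab_wit T (D : T -> Prop) f : in_Sym f -> ~ setstab D f ->
  exists x, ~ (D x <-> D (f x)).
Proof.
move=> Hb Hn; apply: NNPP => Hc.
have Hall : forall x, D x <-> D (f x).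
  by move=> x; apply: NNPP => h; apply: Hc; exists x.
case: Hb Hn => fi fK fiK Hn; apply: Hn; split; first by exists fi.
move=> y; split.
- by case=> x Dx <-; apply: (proj1 (Hall x)).
- by move=> Dy; exists (fi y); [apply: (proj2 (Hall (fi y))); rewrite fiK | rewrite fiK].
Qed.

Lemma InP (T : eqType) (x : T) (l : seq T) : List.In x l -> x \in l.
Proof.
elim: l => //= a l IH [->|/IH]; rewrite inE ?eqxx // => ->; by rewrite orbT.
Qed.

Section Main.
Variables (T : countType) (G : (T -> T) -> Prop) (I : Type) (Delta : I -> T -> Prop).
Hypothesis HG : closed_subgroup_Sym G.
Hypothesis Hnot : forall (Gam : seq T) (s : list I), exists i h,
  ~ List.In i s /\ G h /\ (forall x, x \in Gam -> h x = x) /\ ~ setstab (Delta i) h.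

Record st := St { sg : T -> T; sgi : T -> T; sG : seq T; sL : list I }.
Definition valid s := G (sg s) /\ cancel (sg s) (sgi s) /\ cancel (sgi s) (sg s).
Definition R n s s' :=
  (forall x, x \in sG s -> sg s' x = sg s x /\ sgi s' x = sgi s x) /\
  {subset sG s <= sG s'} /\
  (forall y, @pickle_inv T n = Some y -> y \in sG s') /\
  exists i, sL s' = i :: sL s /\ ~ List.In i (sL s) /\
     exists2 x, x \in sG s' & ~ (Delta i x <-> Delta i (sg s' x)).

Lemma step n s : valid s -> exists s', valid s' /\ R n s s'.
Proof.
case: HG => [[HS Hid Hcomp Hinv] Hcl].
case: s => g gi Gam L [/= Gg [gK giK]].
have [i [h [niL [Gh [hfix nst]]]]] := Hnot (Gam ++ map gi Gam) L.
have [hi Ghi [hK hiK]] := Hinv h Gh.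
have Hex : forall y, @pickle_inv T n = Some y ->
   y \in (if @pickle_inv T n is Some z then [:: z] else [::]).
  by move=> y ->; rewrite inE.
have [Hg|Hg] := classic (setstab (Delta i) g).
- have [x Hx] := nstab_wit (HS h Gh) nst.
  exists (St (g \o h) (hi \o gi)
     (x :: (if @pickle_inv T n is Some z then [:: z] else [::]) ++ Gam) (i :: L)).
  split.
    split; first exact: Hcomp.
    by split => y /=; rewrite ?gK ?hK ?hiK ?giK.
  split.
    move=> y Hy /=; split; first by rewrite hfix // mem_cat Hy.
    have Hh : h (gi y) = gi y by apply: hfix; rewrite mem_cat map_f ?orbT.
    by rewrite -{1}Hh hK.
  split.
    by move=> y Hy /=; rewrite inE mem_cat Hy !orbT.
  split.
    by move=> y /Hex Hy /=; rewrite inE mem_cat Hy orbT.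
  exists i; split => //; split => //; exists x; first by rewrite inE eqxx.
  move=> /= Hc; apply: Hx; have := stab_pt Hg (h x); tauto.
- have [x Hx] := nstab_wit (HS g Gg) Hg.
  exists (St g gi
     (x :: (if @pickle_inv T n is Some z then [:: z] else [::]) ++ Gam) (i :: L)).
  split; first by [].
  split; first by [].
  split.
    by move=> y Hy /=; rewrite inE mem_cat Hy !orbT.
  split.
    by move=> y /Hex Hy /=; rewrite inE mem_cat Hy orbT.
  exists i; split => //; split => //; exists x; first by rewrite inE eqxx.
  exact: Hx.
Qed.

Lemma step' n s : exists s', valid s -> valid s' /\ R n s s'.
Proof.
case: (classic (valid s)) => [v|nv].
  by have [s' H] := step n v; exists s'.
by exists s.
Qed.

Definition F n s := proj1_sig (constructive_indefinite_description _ (step' n s)).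
Lemma FP n s : valid s -> valid (F n s) /\ R n s (F n s).
Proof. exact: (proj2_sig (constructive_indefinite_description _ (step' n s))). Qed.

Fixpoint sq n := match n with 0 => St id id [::] nil | n.+1 => F n (sq n) end.

Lemma sq_valid n : valid (sq n).
Proof.
elim: n => [|n IH] /=; last exact: (FP n IH).1.
by case: HG => [[_ Hid _ _] _]; split.
Qed.

Lemma sq_R n : R n (sq n) (sq n.+1).
Proof. exact: (FP n (sq_valid n)).2. Qed.

Lemma sq_mono0 n k : {subset sG (sq n) <= sG (sq (n + k))} /\
  forall x, x \in sG (sq n) ->
     sg (sq (n + k)) x = sg (sq n) x /\ sgi (sq (n + k)) x = sgi (sq n) x.
Proof.
elim: k => [|k [IH1 IH2]]; first by rewrite addn0; split.
rewrite addnS; have [R1 [R2 _]] := sq_R (n + k); split.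
  by move=> x /IH1 /R2.
move=> x Hx; have [a b] := IH2 x Hx; have [c d] := R1 x (IH1 x Hx).
by rewrite c d.
Qed.

Lemma sq_mono n m : n <= m -> {subset sG (sq n) <= sG (sq m)} /\
  forall x, x \in sG (sq n) ->
     sg (sq m) x = sg (sq n) x /\ sgi (sq m) x = sgi (sq n) x.
Proof. by move=> Hnm; rewrite -(subnKC Hnm); apply: sq_mono0. Qed.

Definition N (x : T) := (pickle x).+1.
Lemma inN x : x \in sG (sq (N x)).
Proof. have [_ [_ [H _]]] := sq_R (pickle x); apply: H; exact: pickleK_inv. Qed.

Definition lg x := sg (sq (N x)) x.
Definition lgi x := sgi (sq (N x)) x.

Lemma lg_eq n x : x \in sG (sq n) -> lg x = sg (sq n) x /\ lgi x = sgi (sq n) x.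
Proof.
move=> Hx.
have [_ H1] := sq_mono (leq_maxl n (N x)).
have [_ H2] := sq_mono (leq_maxr n (N x)).
have [a b] := H1 x Hx; have [c d] := H2 x (inN x).
by rewrite /lg /lgi -c -d a b.
Qed.

Lemma lgK : cancel lg lgi.
Proof.
move=> x; set m := maxn (N x) (N (lg x)).
have Hx : x \in sG (sq m) by apply: (sq_mono (leq_maxl _ _)).1; apply: inN.
have Hy : lg x \in sG (sq m) by apply: (sq_mono (leq_maxr _ _)).1; apply: inN.
rewrite (lg_eq Hy).2 (lg_eq Hx).1; exact: (sq_valid m).2.1.
Qed.

Lemma lgiK : cancel lgi lg.
Proof.
move=> x; set m := maxn (N x) (N (lgi x)).
have Hx : x \in sG (sq m) by apply: (sq_mono (leq_maxl _ _)).1; apply: inN.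
have Hy : lgi x \in sG (sq m) by apply: (sq_mono (leq_maxr _ _)).1; apply: inN.
rewrite (lg_eq Hy).1 (lg_eq Hx).2; exact: (sq_valid m).2.2.
Qed.

Lemma cover (A : seq T) : exists n, {subset A <= sG (sq n)}.
Proof.
elim: A => [|a A [n Hn]]; first by exists 0.
exists (maxn n (N a)) => x; rewrite inE; case/orP.
  by move/eqP ->; apply: (sq_mono (leq_maxr _ _)).1; apply: inN.
by move/Hn; apply: (sq_mono (leq_maxl _ _)).1.
Qed.

Lemma Glg : G lg.
Proof.
case: HG => _ Hcl; apply: Hcl; first exact: (Bijective lgK lgiK).
move=> A; have [n Hn] := cover A; exists (sg (sq n)); first exact: (sq_valid n).1.
by move=> x /Hn /lg_eq [->].
Qed.

Lemma sq_L n : List.NoDup (sL (sq n)) /\ length (sL (sq n)) = n /\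
  forall j, List.In j (sL (sq n)) -> ~ setstab (Delta j) lg.
Proof.
elim: n => [|n [ND [Len Hin]]]; first by split; [constructor | split].
have [_ [_ [_ [i [EL [niL [x Hx Hw]]]]]]] := sq_R n.
rewrite EL; split; first by constructor.
split; first by rewrite /= Len.
move=> j /= [<-|/Hin //] Hst; apply: Hw.
by have := stab_pt Hst x; rewrite (lg_eq Hx).1.
Qed.

Lemma part_ii : exists2 g, G g & infinitely_many (fun i => ~ setstab (Delta i) g).
Proof.
exists lg; first exact: Glg.
move=> [s Hs]; have [ND [Len Hin]] := sq_L (length s).+1.
have := List.NoDup_incl_length ND (fun j Hj => Hs j (Hin j Hj)).
by rewrite Len => /leP; rewrite ltnn.
Qed.

End Main.

Lemma part1 (T : countType) (G : (T -> T) -> Prop)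
  (I : Type) (Delta : I -> T -> Prop) :
  closed_subgroup_Sym G ->
  ((exists Gamma : seq T,
       cofinitely (fun i => subgrp_le (ptstab G Gamma) (setstab (Delta i))))
   \/ (exists2 g, G g & infinitely_many (fun i => ~ setstab (Delta i) g))).
Proof.
move=> HG; case: (classic (exists Gamma : seq T,
       cofinitely (fun i => subgrp_le (ptstab G Gamma) (setstab (Delta i)))))
  => [H|H]; [by left | right].
apply: (@part_ii T G I Delta HG) => Gam s; apply: NNPP => Hc; apply: H.
exists Gam, s => i ni g [Gg Hfix]; apply: NNPP => nst; apply: Hc.
by exists i, g.
Qed.

Theorem lemma11p2 (T : countType) (G : (T -> T) -> Prop)
  (I : Type) (Delta : I -> T -> Prop) :
  closed_subgroup_Sym G ->
  ((exists Gamma : seq T,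
       cofinitely (fun i => subgrp_le (ptstab G Gamma) (setstab (Delta i))))
   \/ (exists2 g, G g & infinitely_many (fun i => ~ setstab (Delta i) g)))
  /\
  ((forall i, finite_subset (Delta i)) ->
   (exists Gamma : seq T,
       forall i, subgrp_le (ptstab G Gamma) (setstab (Delta i)))
   \/ (exists2 g, G g & infinitely_many (fun i => ~ setstab (Delta i) g))).
Proof.
move=> HG; have P1 := part1 Delta HG; split => //.
move=> Hfin; case: P1 => [[Gam [s Hs]]|]; last by right.
left.
have : exists Gam', {subset Gam <= Gam'} /\
   forall i, List.In i s -> subgrp_le (ptstab G Gam') (setstab (Delta i)).
  elim: s {Hs} => [|a s [Gam' [sub H]]]; first by exists Gam; split.
  have [l Hl] := Hfin a.
  exists (l ++ Gam'); split.
    by move=> x /sub Hx; rewrite mem_cat Hx orbT.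
  move=> i /= [<-|Hi] g [Gg Hfix].
  - case: HG => [[HS _ _ _] _]; split; first exact: HS.
    move=> y; split.
      case=> x Dx <-; rewrite Hfix //; by rewrite mem_cat (InP (Hl x Dx)).
    by move=> Dy; exists y; rewrite // Hfix // mem_cat (InP (Hl y Dy)).
  - apply: (H i Hi); split => // x Hx; apply: Hfix; by rewrite mem_cat Hx orbT.
case=> Gam' [sub H]; exists Gam' => i.
case: (classic (List.In i s)) => [Hi|Hi]; first exact: H.
move=> g [Gg Hfix]; apply: (Hs i Hi); split => // x /sub; exact: Hfix.
Qed.
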